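(* Let $E_2=R[w_2,w_3,\dots]$ be the $E_2$ page described in the context, set $W_+=k[b_{10}^{\pm1}][w_2,w_3,\dots]$ and $W_-=h_{10}W_+$, so $E_2=W_+\oplus W_-$. Let $x\in E_2$ be a nonzero element lying in a single filtration $s$ and a single degree $u'=u-6(s+t)$. If $u'\equiv 0\pmod 4$, then $x\in W_+$ and $s\equiv -u'\pmod 9$. Otherwise $u'\equiv 2\pmod 4$, in which case $x\in W_-$ and $s\equiv 7-u'\pmod 9$.
   Context: $k=\mathbb{F}_3$, $R=E[h_{10}]\otimes k[b_{10}^{\pm1}]$. The spectral sequence is the $b_{10}$-localized $K(\xi_1)$-based Adams spectral sequence converging to $b_{10}^{-1}\operatorname{Ext}_P(\mathbb{F}_3,\mathbb{F}_3)$ ($P$ the dual reduced powers at $p=3$), trigraded by filtration $s$, internal homological degree $t$ and internal topological degree $u$, with $E_2\cong R[w_2,w_3,\dots]$ a polynomial $R$-algebra. Degrees: $h_{10}$ has $(s,t,u)=(0,1,4)$, $b_{10}$ has $(0,2,12)$, $w_n$ ($n\geq2$) has $(1,1,2(3^n+1))$. Hence $u'(h_{10})=-2$, $u'(b_{10})=0$, $u'(w_n)=2(3^n-5)$. *)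

(* Defs.v *)
From HB Require Import structures.
From mathcomp Require Import all_boot all_order all_algebra.
From mathcomp Require Import finmap.
Set Implicit Arguments. Unset Strict Implicit. Unset Printing Implicit Defensive.
Import Order.TTheory GRing.Theory Num.Theory.
Local Open Scope fset_scope.

(* Exponent vector of a monomial in w_2, w_3, ... : finitely supported
   alpha : nat -> nat, where alpha i is the exponent of w_(i+2). *)
Definition Expo := {fsfun nat -> nat with 0%N}.

(* A monomial h10^eps * b10^j * prod_n w_n^(alpha (n-2)),
   eps \in {0,1} (E[h10] exterior), j \in Z (b10 inverted). *)
Definition Mon := (bool * int * Expo)%type.

Definition mon_h (m : Mon) : bool := m.1.1.
Definition mon_b (m : Mon) : int := m.1.2.
Definition mon_w (m : Mon) : Expo := m.2.

(* E_2 = R[w_2,w_3,...] over k = F_3, as a k-vector space: finitely supported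
   F_3-valued functions on the monomial basis. *)
Definition E2 := {fsfun Mon -> 'F_3 with 0%R}.

(* degrees of w_(i+2) : (s,t,u) = (1, 1, 2(3^(i+2)+1)) *)
Definition w_u (i : nat) : int := (2 * (3 ^ (i.+2) + 1))%N%:Z.

Definition mon_s (m : Mon) : nat := (\sum_(i <- finsupp (mon_w m)) mon_w m i)%N.
Definition mon_t (m : Mon) : int :=
  ((mon_h m : nat)%:Z + 2 * mon_b m + (mon_s m)%:Z)%R.
Definition mon_u (m : Mon) : int :=
  (4 * (mon_h m : nat)%:Z + 12 * mon_b m
   + \sum_(i <- finsupp (mon_w m)) ((mon_w m i)%:Z * w_u i))%R.
Definition mon_u' (m : Mon) : int :=
  (mon_u m - 6 * ((mon_s m)%:Z + mon_t m))%R.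

Definition homog (x : E2) (s : nat) (u' : int) : Prop :=
  forall m, m \in finsupp x -> mon_s m = s /\ mon_u' m = u'.

(* W_+ = k[b10^{+-1}][w_2,...] : spanned by monomials without h10;
   W_- = h10 W_+ : spanned by monomials containing h10. *)
Definition inWplus (x : E2) : Prop := forall m, m \in finsupp x -> mon_h m = false.
Definition inWminus (x : E2) : Prop := forall m, m \in finsupp x -> mon_h m = true.

(* Main.v *)
Require Import Defs.
From HB Require Import structures.
From mathcomp Require Import all_boot all_order all_algebra.
From mathcomp Require Import finmap zify ring.
Import Order.TTheory GRing.Theory Num.Theory.
Local Open Scope fset_scope.
Local Open Scope ring_scope.

Lemma odd3 (i : nat) : odd (3 ^ i).
Proof. by rewrite oddX orbT. Qed.

Lemma wu_mod (i : nat) :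
  w_u i = 11 + 9 * ((2 * 3 ^ i)%N%:Z - 1) /\
  w_u i = 12 + 4 * ((w_u i - 12) %/ 4)%Z.
Proof.
have h3 : (3 ^ i.+2 = 9 * 3 ^ i)%N by rewrite !expnS mulnA.
have [q hq] : exists q, (3 ^ i = q.*2.+1)%N.
  by exists (3 ^ i)./2; rewrite -[in LHS](odd_double_half (3 ^ i)) odd3.
rewrite /w_u h3 hq. split; first lia.
lia.
Qed.

Lemma sum_lin (r : seq nat) (a : nat -> nat) (c d : int) (f : nat -> int) :
  \sum_(i <- r) ((a i)%:Z * (c + d * f i)) =
  c * (\sum_(i <- r) a i)%N%:Z + d * \sum_(i <- r) (a i)%:Z * f i.
Proof.
rewrite -natz natr_sum big_distrr /= big_distrr /= -big_split /=.
by apply: eq_bigr => i _; rewrite natz mulrDr mulrCA [_ * c]mulrC.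
Qed.

Lemma key (m : Mon) : exists K L : int,
  mon_u' m = -2 * (mon_h m : nat)%:Z - (mon_s m)%:Z + 9 * K /\
  mon_u' m = -2 * (mon_h m : nat)%:Z + 4 * L.
Proof.
rewrite /mon_u' /mon_t /mon_u /mon_s.
set r := finsupp (mon_w m); set a := mon_w m.
exists (\sum_(i <- r) (a i)%:Z * ((2 * 3 ^ i)%N%:Z - 1)).
exists (\sum_(i <- r) (a i)%:Z * ((w_u i - 12) %/ 4)%Z).
split.
- rewrite (eq_bigr (fun i => (a i)%:Z * (11 + 9 * ((2 * 3 ^ i)%N%:Z - 1)))); last first.
    by move=> i _; rewrite -(proj1 (wu_mod i)).
  rewrite sum_lin; ring.
- rewrite (eq_bigr (fun i => (a i)%:Z * (12 + 4 * ((w_u i - 12) %/ 4)%Z))); last first.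
    by move=> i _; rewrite -(proj2 (wu_mod i)).
  rewrite sum_lin; ring.
Qed.

Local Close Scope ring_scope.
Theorem lemma2p2 (x : E2) (s : nat) (u' : int) :
  finsupp x != fset0 -> homog x s u' ->
  (((u' %% 4)%Z = 0%R -> inWplus x /\ (s%:Z = - u' %[mod 9])%Z) /\
   ((u' %% 4)%Z <> 0%R ->
      (u' %% 4)%Z = 2%R /\ inWminus x /\ (s%:Z = 7 - u' %[mod 9])%Z)).
Proof.
move=> /fset0Pn [m0 hm0] hom.
have hh : forall m, m \in finsupp x -> 
   (mon_h m = false /\ (u' %% 4)%Z = 0 /\ (s%:Z = - u' %[mod 9])%Z) \/
   (mon_h m = true /\ (u' %% 4)%Z = 2 /\ (s%:Z = 7 - u' %[mod 9])%Z).
  move=> m /hom [hs hu]; have [K [L [h1 h2]]] := key m.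
  rewrite hs hu in h1 h2.
  case: (mon_h m) h1 h2 => /= h1 h2; [right|left]; split => //; split; lia.
split.
- move=> h0; split.
  + by move=> m /hh [[] //|[_ [h2 _]]]; rewrite h0 in h2.
  + by case: (hh _ hm0) => [[_ [_ ->]] | [_ [h2 _]]] //; rewrite h0 in h2.
- move=> h0; split; last split.
  + by case: (hh _ hm0) => [[_ [h2 _]] | [_ [-> _]]].
  + by move=> m /hh [[_ [h2 _]]|[] //].
  + by case: (hh _ hm0) => [[_ [h2 _]] | [_ [_ ->]]].
Qed.
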